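(* Let $m=2$ and let $n\ge 1$ be arbitrary. For every distribution $\mathcal{D}$ supported on $[0,1]$, the majority rule (which selects an alternative ranked first by at least as many voters as the other alternative, ties broken arbitrarily) is both an expected-distortion-maximizing rule and an expected-welfare-maximizing rule for $\mathcal{D}$.
   Context: There are $n$ voters $N=\{1,\dots,n\}$ and $m$ alternatives $A=\{1,\dots,m\}$. A preference profile $\sigma=(\sigma_1,\dots,\sigma_n)$ consists of a ranking (linear order) $\sigma_i$ of $A$ for each voter; position $1$ is the top. A (deterministic) voting rule $f$ maps each preference profile to an alternative $f(\sigma)\in A$. Given a distribution $\mathcal{D}$ and a profile $\sigma$, a random utility profile $u$ consistent with $\sigma$ is generated as follows: independently for each voter $i$, draw $m$ i.i.d. samples from $\mathcal{D}$ and assign them, from highest to lowest, to the alternatives in the order of $\sigma_i$ (the alternative in position $r$ gets the $r$-th largest sample). The social welfare of alternative $j$ is $\mathrm{sw}(j,u)=\sum_{i\in N}u_{ij}$; all expectations are over this random $u$. The distortion of alternative $j$ at $\sigma$ is the random variable $\mathrm{dist}(j,\sigma)=\mathrm{sw}(j,u)/\max_{k\in A}\mathrm{sw}(k,u)$. A rule is an expected-distortion-maximizing rule for $\mathcal{D}$ if for every profile $\sigma$ it selects an alternative maximizing $\mathbb{E}[\mathrm{dist}(j,\sigma)]$ over $j\in A$; it is an expected-welfare-maximizing rule for $\mathcal{D}$ if for every $\sigma$ it selects an alternative maximizing $\mathbb{E}[\mathrm{sw}(j,u)]$ over $j\in A$. *)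

(* Defs.v *)
From HB Require Import structures.
From mathcomp Require Import all_boot all_order all_algebra all_fingroup.
From mathcomp Require Import all_classical all_reals all_analysis.
Set Implicit Arguments. Unset Strict Implicit. Unset Printing Implicit Defensive.
Import Order.TTheory GRing.Theory Num.Theory.
Local Open Scope ring_scope.

Section Voting.
Variables (R : realType) (n m : nat).

(* A preference profile: sigma i is voter i's ranking of the alternatives 'I_m,
   read as "sigma i r = the alternative in position r" (r = 0 is the top). *)
Definition profile := 'I_n -> {perm 'I_m}.

Definition voting_rule := profile -> 'I_m.

(* Raw samples: s (i * m + r) is the r-th of the m i.i.d. samples of voter i. *)
Definition voter_samples (s : nat -> R) (i : 'I_n) : seq R :=
  [seq s (i * m + r)%N | r <- iota 0 m].

(* Utility of voter i for alternative j: the alternative in position r gets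
   the r-th largest of the voter's samples (r = 0: the largest). *)
Definition utility (sigma : profile) (s : nat -> R) (i : 'I_n) (j : 'I_m) : R :=
  nth 0 (sort (fun x y : R => y <= x) (voter_samples s i)) (val ((sigma i)^-1%g j)).

Definition sw (sigma : profile) (s : nat -> R) (j : 'I_m) : R :=
  \sum_(i < n) utility sigma s i j.

(* max_k sw(k,u) (seeded with sw(j,u), which belongs to the family anyway). *)
Definition max_sw (sigma : profile) (s : nat -> R) (j : 'I_m) : R :=
  \big[Num.max/sw sigma s j]_(k < m) sw sigma s k.

Definition dist (sigma : profile) (s : nat -> R) (j : 'I_m) : R :=
  sw sigma s j / max_sw sigma s j.

(* Iterated integral of f against D^{\otimes k} on the first k coordinates
   (expectation w.r.t. k i.i.d. draws from D). *)
Fixpoint iter_int (D : probability R R) (k : nat) (f : (nat -> R) -> \bar R)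
  : \bar R :=
  if k is k'.+1 then
    (\int[D]_x iter_int D k' (fun v => f (fun i => if i is i'.+1 then v i' else x)))%E
  else f (fun _ => 0).

Definition exp_dist (D : probability R R) (sigma : profile) (j : 'I_m) : \bar R :=
  iter_int D (n * m) (fun s => (dist sigma s j)%:E).

Definition exp_sw (D : probability R R) (sigma : profile) (j : 'I_m) : \bar R :=
  iter_int D (n * m) (fun s => (sw sigma s j)%:E).

Definition exp_dist_maximizing (D : probability R R) (f : voting_rule) : Prop :=
  forall sigma (j : 'I_m), (exp_dist D sigma j <= exp_dist D sigma (f sigma))%E.

Definition exp_welfare_maximizing (D : probability R R) (f : voting_rule) : Prop :=
  forall sigma (j : 'I_m), (exp_sw D sigma j <= exp_sw D sigma (f sigma))%E.

End Voting.

Definition plurality_score (n k : nat) (sigma : profile n k.+1) (j : 'I_k.+1) : nat :=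
  #|[set i : 'I_n | sigma i ord0 == j]|.

Definition majority_rule (n : nat) (f : voting_rule n 2) : Prop :=
  forall (sigma : profile n 2) (j : 'I_2),
    (plurality_score sigma j <= plurality_score sigma (f sigma))%N.

(* Main.v *)
Require Import Defs.
From HB Require Import structures.
From mathcomp Require Import all_boot all_order all_algebra all_fingroup.
From mathcomp Require Import all_classical all_reals all_analysis.
From mathcomp Require Import measurable_realfun zify lra.
Import Order.TTheory GRing.Theory Num.Theory.
Local Open Scope ring_scope.
Local Open Scope classical_set_scope.
Set Implicit Arguments. Unset Strict Implicit. Unset Printing Implicit Defensive.
Section AE.
Import HBNNSimple.
Variable R : realType.
Variable D : probability R R.
Hypothesis hD : D `[0%R, 1%R] = 1%E.
Local Open Scope ereal_scope.

Let S : set R := `[0%R, 1%R].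

Let mS : measurable S. Proof. exact: measurable_itv. Qed.
Let DSc : D (~` S) = 0.
Proof. by rewrite probability_setC // hD subee. Qed.

Lemma int_mono_nn (f g : R -> \bar R) : (forall x, 0 <= f x) ->
  (forall x, f x <= g x) -> \int[D]_x f x <= \int[D]_x g x.
Proof.
move=> f0 fg; have g0 x : 0 <= g x := le_trans (f0 x) (fg x).
rewrite (ge0_integralTE _ f0) (ge0_integralTE _ g0).
apply: ereal_sup_le => _ [h /= hf <-]; exists h => //= x.
exact: le_trans (hf x) (fg x).
Qed.

Lemma int_le_patch (H : R -> \bar R) : (forall x, 0 <= H x) ->
  \int[D]_x H x <= \int[D]_x (H \_ S) x.
Proof.
move=> H0; rewrite (ge0_integralTE _ H0); apply: ge_ereal_sup => _ [h /= hH <-].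
rewrite -integralT_nnsfun.
have -> : \int[D]_x (h x)%:E = \int[D]_(x in S `|` ~` S) (h x)%:E by rewrite setUv.
rewrite ge0_integral_setU //; last 3 first.
- by rewrite setUv; apply/measurable_EFinP; exact: measurable_funPT.
- by move=> x _; rewrite lee_fin.
- by rewrite /disj_set setICr.
rewrite [X in _ + X]null_set_integral //; last first.
  have mh : measurable_fun [set: R] (fun x : R => ((h x)%:E : \bar R)).
    by apply/measurable_EFinP; exact: measurable_funPT.
  exact: (measurable_funTS mh).
  exact: measurableC.
rewrite adde0 integral_mkcond; apply: int_mono_nn => x.
  by rewrite /patch; case: ifP => // _; rewrite lee_fin.
by rewrite /patch; case: ifP => // _.
exact: measurableC.
Qed.

Lemma int_le_ae (F G : R -> \bar R) : (forall x, S x -> F x <= G x) ->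
  \int[D]_x F x <= \int[D]_x G x.
Proof.
move=> FG; rewrite (integralE _ _ F) (integralE _ _ G); apply: leeB.
- apply: (le_trans (int_le_patch (funepos_ge0 F))).
  apply: (@le_trans _ _ (\int[D]_x ((G^\+) \_ S) x)).
    apply: int_mono_nn => x; first by rewrite /patch; case: ifP => _; rewrite ?funepos_ge0 ?funeneg_ge0.
    rewrite /patch; case: ifP => // xS.
    apply: (funepos_le (D:=S)) => // y; rewrite in_setE; exact: FG.
  apply: int_mono_nn => x; first by rewrite /patch; case: ifP => _; rewrite ?funepos_ge0 ?funeneg_ge0.
  by rewrite /patch; case: ifP => _; rewrite ?funepos_ge0 ?funeneg_ge0.
- apply: (le_trans (int_le_patch (funeneg_ge0 G))).
  apply: (@le_trans _ _ (\int[D]_x ((F^\-) \_ S) x)).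
    apply: int_mono_nn => x; first by rewrite /patch; case: ifP => _; rewrite ?funepos_ge0 ?funeneg_ge0.
    rewrite /patch; case: ifP => // xS.
    apply: (funeneg_le (D:=S)) => // y; rewrite in_setE; exact: FG.
  apply: int_mono_nn => x; first by rewrite /patch; case: ifP => _; rewrite ?funepos_ge0 ?funeneg_ge0.
  by rewrite /patch; case: ifP => _; rewrite ?funepos_ge0 ?funeneg_ge0.
Qed.

Lemma iter_le_ae k (f g : (nat -> R) -> \bar R) :
  (forall v, (forall i, S (v i)) -> f v <= g v) ->
  iter_int D k f <= iter_int D k g.
Proof.
elim: k f g => [|k IH] f g fg /=.
  by apply: fg => i; rewrite /S /= in_itv /= lexx ler01.
apply: int_le_ae => x Sx; apply: IH => v Sv; apply: fg => -[|i] //=.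
Qed.

End AE.

Ltac atom_cases :=
  repeat match goal with
  | |- context [?x == ?y] =>
    lazymatch x with context [if _ then _ else _] => fail | _ =>
    lazymatch y with context [if _ then _ else _] => fail | _ =>
      case: (@eqP _ x y) => ? /= end end
  end.

Section Exch.
Variable R : realType.
Variable D : probability R R.
Local Open Scope ereal_scope.

Definition vcons (x : R) (v : nat -> R) : nat -> R :=
  fun i => if i is i'.+1 then v i' else x.

Definition Meas (f : (nat -> R) -> \bar R) : Prop :=
  forall d (Y : measurableType d) (g : nat -> Y -> R),
  (forall i, measurable_fun setT (g i)) ->
  measurable_fun setT (fun y => f (fun i => g i y)).

Lemma iter_ge0 k f : (forall v, 0 <= f v) -> 0 <= iter_int D k f.
Proof.
elim: k f => [|k IH] f f0 //=; apply: integral_ge0 => x _; exact: IH.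
Qed.

Lemma iter_meas k : forall d (X : measurableType d)
  (h : X -> (nat -> R) -> \bar R),
  (forall x v, 0 <= h x v) ->
  (forall d' (Y : measurableType d') (p : Y -> X) (g : nat -> Y -> R),
     measurable_fun setT p -> (forall i, measurable_fun setT (g i)) ->
     measurable_fun setT (fun y => h (p y) (fun i => g i y))) ->
  measurable_fun setT (fun x => iter_int D k (h x)).
Proof.
elim: k => [|k IH] d X h h0 hm /=.
  have := hm _ X id (fun _ _ => 0%R).
  by apply => // i; exact: measurable_cst.
pose h' (z : X * R) v := h z.1 (vcons z.2 v).
have m' : measurable_fun setT (fun z : X * R => iter_int D k (h' z)).
  apply: IH => [z v|d' Y p g mp mg]; first exact: h0.
  pose G i := if i is i'.+1 then g i' else snd \o p.
  have -> : (fun y => h' (p y) (fun i => g i y)) =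
            (fun y => h ((fst \o p) y) (fun i => G i y)).
    by apply/funext => y; rewrite /h'; congr h; apply/funext => -[|i].
  apply: hm; first exact: measurableT_comp measurable_fst mp.
  by case => [|i] //=; exact: measurableT_comp measurable_snd mp.
have := measurable_fun_fubini_tonelli_F (m2 := D) _ m' (fun z => @iter_ge0 k (h' z) (fun v => h0 _ _)).
by [].
Qed.

Lemma Meas_vcons x f : Meas f -> Meas (fun v => f (vcons x v)).
Proof.
move=> mf d Y g mg.
pose G i := if i is i'.+1 then g i' else (fun _ : Y => x).
have -> : (fun y => f (vcons x (fun i => g i y))) = (fun y => f (fun i => G i y)).
  by apply/funext => y; congr f; apply/funext => -[|i].
by apply: mf => -[|i] //=; exact: measurable_cst.
Qed.

Definition act (p : nat -> nat) (f : (nat -> R) -> \bar R) :=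
  fun v => f (fun i => v (p i)).

Lemma Meas_act p f : Meas f -> Meas (act p f).
Proof. by move=> mf d Y g mg; exact: (mf d Y (fun i => g (p i))). Qed.

Lemma swap_int (G : R * R -> \bar R) : measurable_fun setT G ->
  (forall z, 0 <= G z) ->
  \int[D]_x \int[D]_y G (y, x) = \int[D]_x \int[D]_y G (x, y).
Proof.
move=> mG G0.
have mG' : measurable_fun setT (fun z : R * R => G (z.2, z.1)).
  apply: (measurableT_comp mG).
  exact: measurable_fun_pair measurable_snd measurable_fst.
exact: (fubini_tonelli (m1 := D) (m2 := D) _ mG' (fun z => G0 _)).
Qed.

Definition Inv k (p : nat -> nat) := forall f, Meas f -> (forall v, 0 <= f v) ->
  iter_int D k (act p f) = iter_int D k f.

Definition sw_ (a i : nat) : nat := if i == a then a.+1 else if i == a.+1 then a else i.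

Lemma Inv_sw a k : (a.+2 <= k)%N -> Inv k (sw_ a).
Proof.
elim: a k => [|a IH] k hk f mf f0.
  case: k hk => [|[|k]] // _.
  pose G (z : R * R) := iter_int D k (fun w => f (vcons z.1 (vcons z.2 w))).
  have mG : measurable_fun setT G.
    apply: (@iter_meas k _ _ (fun (z : R * R) w => f (vcons z.1 (vcons z.2 w)))) => //.
    move=> d' Y p g mp mg.
    pose H i := if i is i'.+1 then (if i' is i''.+1 then g i'' else snd \o p)
                else fst \o p.
    have -> : (fun y => f (vcons (p y).1 (vcons (p y).2 (fun i => g i y)))) =
              (fun y => f (fun i => H i y)).
      by apply/funext => y; congr f; apply/funext => -[|[|i]].
    apply: mf => -[|[|i]] //=.
      exact: measurableT_comp measurable_fst mp.
    exact: measurableT_comp measurable_snd mp.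
  have G0 z : 0 <= G z by apply: iter_ge0.
  rewrite -[RHS](swap_int mG G0) /=.
  apply: eq_integral => x _; apply: eq_integral => y _.
  rewrite /G /=; congr iter_int; apply/funext => w; rewrite /act; congr f.
  by apply/funext => -[|[|i]].
case: k hk => [|k] // hk /=.
apply: eq_integral => x _.
rewrite -(IH k hk (fun v => f (vcons x v))); last 2 first.
- exact: Meas_vcons.
- by move=> v; exact: f0.
congr iter_int; apply/funext => v; rewrite /act; congr f.
apply/funext => -[|i] /=; rewrite /sw_ //=.
by rewrite !eqSS; case: ifP => //; case: ifP.
Qed.


Lemma Inv_comp k p q : Inv k p -> Inv k q -> Inv k (fun i => p (q i)).
Proof.
move=> Hp Hq f mf f0; rewrite -[RHS](Hq f mf f0).
have -> : act (fun i => p (q i)) f = act p (act q f) by [].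
exact: (Hp (act q f) (@Meas_act q f mf) (fun v => f0 _)).
Qed.

Lemma Inv_ext k p q : p =1 q -> Inv k p -> Inv k q.
Proof. by move=> pq; have -> : q = p by apply/funext => i; rewrite pq. Qed.

Definition tr (a b i : nat) : nat := if i == a then b else if i == b then a else i.

Lemma Inv_tr k a b : (a < b)%N -> (b < k)%N -> Inv k (tr a b).
Proof.
elim: b => [//|b IH] ab bk.
case: (ltngtP a b) => [ab'|ba|eab]; last first.
- apply: (@Inv_ext _ (sw_ a)); last by apply: Inv_sw; rewrite -eab in bk.
  by move=> i; rewrite /tr /sw_ eab.
- lia.
apply: (@Inv_ext _ (fun i => sw_ b (tr a b (sw_ b i)))).
  by move=> i; rewrite /tr /sw_; atom_cases; lia.
apply: Inv_comp; first by apply: Inv_sw; lia.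
apply: Inv_comp; first by apply: IH; lia.
by apply: Inv_sw; lia.
Qed.

Definition vt (i0 i1 c : nat) : nat := tr (i0 * 2) (i1 * 2) (tr (i0 * 2).+1 (i1 * 2).+1 c).

Lemma Inv_vt k i0 i1 : (i0 < i1)%N -> (i1 * 2 < k)%N -> ((i1 * 2).+1 < k)%N ->
  Inv k (vt i0 i1).
Proof.
move=> h1 h2 h3; apply: Inv_comp; apply: Inv_tr => //; lia.
Qed.

Lemma vt_val i0 i1 i r : (r < 2)%N ->
  vt i0 i1 (i * 2 + r) = ((if i == i0 then i1 else if i == i1 then i0 else i) * 2 + r)%N.
Proof. by move=> r2; rewrite /vt /tr; atom_cases; lia. Qed.

End Exch.

Section Fam.
Variable R : realType.
Variable n : nat.

Definition clamp (x : R) : R := Num.max 0 (Num.min x 1).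
Definition cl (v : nat -> R) : nat -> R := fun i => clamp (v i).
Definition Mx (s : nat -> R) (i : nat) : R := Num.max (s (i * 2)%N) (s (i * 2 + 1)%N).
Definition Mn (s : nat -> R) (i : nat) : R := Num.min (s (i * 2)%N) (s (i * 2 + 1)%N).
Definition Asum (S : {set 'I_n}) (s : nat -> R) : R :=
  \sum_(i < n) (if i \in S then Mx s i else Mn s i).
Definition Bsum (S : {set 'I_n}) (s : nat -> R) : R :=
  \sum_(i < n) (if i \in S then Mn s i else Mx s i).
Definition Psi (S : {set 'I_n}) (s : nat -> R) : R :=
  Asum S s / Num.max (Asum S s) (Bsum S s).

Lemma clamp01 x : 0 <= clamp x <= 1.
Proof.
rewrite /clamp; apply/andP; split; first by rewrite le_max lexx.
by rewrite ge_max ler01 ge_min lexx orbT.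
Qed.

Lemma clampE x : 0 <= x <= 1 -> clamp x = x.
Proof.
case/andP => x0 x1; rewrite /clamp.
by rewrite (@min_l _ _ x 1) // max_r.
Qed.

Lemma meas_max d (Y : measurableType d) (f g : Y -> R) :
  measurable_fun setT f -> measurable_fun setT g ->
  measurable_fun setT (fun y => Num.max (f y) (g y)).
Proof. exact: measurable_maxr. Qed.

Lemma meas_min d (Y : measurableType d) (f g : Y -> R) :
  measurable_fun setT f -> measurable_fun setT g ->
  measurable_fun setT (fun y => Num.min (f y) (g y)).
Proof. exact: measurable_minr. Qed.

Lemma meas_clamp d (Y : measurableType d) (f : Y -> R) :
  measurable_fun setT f -> measurable_fun setT (fun y => clamp (f y)).
Proof.
move=> mf; apply: meas_max; first exact: measurable_cst.
by apply: meas_min => //; exact: measurable_cst.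
Qed.

End Fam.

Section Fam2.
Variable R : realType.
Variable n : nat.
Implicit Types (S : {set 'I_n}) (s : nat -> R).

Definition nonneg (s : nat -> R) := forall i, 0 <= s i.

Lemma Mn_ge0 s i : nonneg s -> 0 <= Mn s i.
Proof. by move=> s0; rewrite /Mn le_min !s0. Qed.

Lemma Mn_le_Mx s i : Mn s i <= Mx s i.
Proof. by rewrite /Mn /Mx ge_min !le_max lexx. Qed.

Lemma Asum_ge0 S s : nonneg s -> 0 <= Asum S s.
Proof.
move=> s0; apply: sumr_ge0 => i _; case: ifP => _; last exact: Mn_ge0.
by rewrite (le_trans _ (Mn_le_Mx _ _)) //; exact: Mn_ge0.
Qed.

Lemma Bsum_ge0 S s : nonneg s -> 0 <= Bsum S s.
Proof.
move=> s0; apply: sumr_ge0 => i _; case: ifP => _; first exact: Mn_ge0.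
by rewrite (le_trans _ (Mn_le_Mx _ _)) //; exact: Mn_ge0.
Qed.

Lemma Asum_mono S S' s : S \subset S' -> Asum S s <= Asum S' s.
Proof.
move=> /fintype.subsetP SS; apply: ler_sum => i _.
case: ifP => iS; first by rewrite (SS _ iS).
by case: ifP => _; rewrite ?Mn_le_Mx.
Qed.

Lemma Bsum_anti S S' s : S \subset S' -> Bsum S' s <= Bsum S s.
Proof.
move=> /fintype.subsetP SS; apply: ler_sum => i _.
case: (boolP (i \in S)) => iS; first by rewrite (SS _ iS).
by case: ifP => iS'; rewrite ?Mn_le_Mx.
Qed.

Lemma ratio_mono (a a' b b' : R) : 0 <= a -> a <= a' -> 0 <= b' -> b' <= b ->
  a / Num.max a b <= a' / Num.max a' b'.
Proof.
move=> a0 aa b0 bb.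
have a'0 : 0 <= a' := le_trans a0 aa.
have [->|an0] := eqVneq a 0.
  by rewrite mul0r divr_ge0 // le_max a'0.
have ap : 0 < a by rewrite lt_def an0 a0.
have mp : 0 < Num.max a b by rewrite lt_max ap.
have [ba'|a'b] := leP b' a'.
  rewrite divff ?gt_eqF ?(lt_le_trans ap aa) //.
  by rewrite ler_pdivrMr // mul1r le_max lexx.
have b'p : 0 < b' by apply: le_lt_trans a'b.
rewrite [Num.max a b]max_r; last first.
  by apply: le_trans bb; apply: le_trans aa (ltW a'b).
have bp : 0 < b by apply: lt_le_trans bb.
rewrite ler_pdivrMr // mulrAC ler_pdivlMr //.
by nra.
Qed.

Lemma Psi_mono S S' s : S \subset S' -> nonneg s -> Psi S s <= Psi S' s.
Proof.
move=> SS s0; apply: ratio_mono; rewrite ?Asum_ge0 ?Bsum_ge0 //.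
  exact: Asum_mono.
exact: Bsum_anti.
Qed.

Lemma Psi_ge0 S s : nonneg s -> 0 <= Psi S s.
Proof.
move=> s0; apply: divr_ge0; first exact: Asum_ge0.
by rewrite le_max Asum_ge0.
Qed.

Lemma tperm_val (i0 i1 i : 'I_n) : (tperm i0 i1 i : nat) =
  if (i : nat) == i0 then (i1 : nat) else if (i : nat) == i1 then (i0 : nat) else i.
Proof.
case: tpermP => [->|->|/eqP ni0 /eqP ni1]; rewrite ?eqxx //.
  by case: eqP => // /val_inj ->.
by rewrite !val_eqE (negbTE ni0) (negbTE ni1).
Qed.

Lemma Mx_vt (i0 i1 i : 'I_n) s :
  Mx (fun c => s (vt i0 i1 c)) i = Mx s (tperm i0 i1 i).
Proof.
rewrite /Mx tperm_val.
have := @vt_val i0 i1 i 0 isT; rewrite !addn0 => ->.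
by rewrite vt_val.
Qed.

Lemma Mn_vt (i0 i1 i : 'I_n) s :
  Mn (fun c => s (vt i0 i1 c)) i = Mn s (tperm i0 i1 i).
Proof.
rewrite /Mn tperm_val.
have := @vt_val i0 i1 i 0 isT; rewrite !addn0 => ->.
by rewrite vt_val.
Qed.

Lemma Asum_vt S (i0 i1 : 'I_n) s :
  Asum S (fun c => s (vt i0 i1 c)) = Asum (tperm i0 i1 @^-1: S) s.
Proof.
rewrite /Asum [RHS](reindex_inj (h := tperm i0 i1) (@perm_inj _ _)) /=.
apply: eq_bigr => i _; rewrite inE tpermK Mx_vt Mn_vt //.
Qed.

Lemma Bsum_vt S (i0 i1 : 'I_n) s :
  Bsum S (fun c => s (vt i0 i1 c)) = Bsum (tperm i0 i1 @^-1: S) s.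
Proof.
rewrite /Bsum [RHS](reindex_inj (h := tperm i0 i1) (@perm_inj _ _)) /=.
apply: eq_bigr => i _; rewrite inE tpermK Mx_vt Mn_vt //.
Qed.

Lemma Psi_vt S (i0 i1 : 'I_n) s :
  Psi S (fun c => s (vt i0 i1 c)) = Psi (tperm i0 i1 @^-1: S) s.
Proof. by rewrite /Psi Asum_vt Bsum_vt. Qed.

End Fam2.

Section Meas3.
Variable R : realType.
Variable n : nat.
Local Open Scope ereal_scope.

Lemma meas_Asum (S : {set 'I_n}) d (Y : measurableType d) (g : nat -> Y -> R) :
  (forall i, measurable_fun setT (g i)) ->
  measurable_fun setT (fun y => Asum S (cl (fun i => g i y))).
Proof.
move=> mg; rewrite /Asum; apply: measurable_sum => i.
case: (i \in S); [apply: meas_max|apply: meas_min]; exact: meas_clamp.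
Qed.

Lemma meas_Bsum (S : {set 'I_n}) d (Y : measurableType d) (g : nat -> Y -> R) :
  (forall i, measurable_fun setT (g i)) ->
  measurable_fun setT (fun y => Bsum S (cl (fun i => g i y))).
Proof.
move=> mg; rewrite /Bsum; apply: measurable_sum => i.
case: (i \in S); [apply: meas_min|apply: meas_max]; exact: meas_clamp.
Qed.

Lemma cl_nonneg (v : nat -> R) : nonneg (cl v).
Proof. by move=> i; case/andP: (clamp01 (v i)). Qed.

Lemma Meas_Asum (S : {set 'I_n}) : Meas (fun v : nat -> R => (Asum S (cl v))%:E).
Proof.
move=> d Y g mg; apply/measurable_EFinP; exact: meas_Asum.
Qed.

Lemma Meas_Psi (S : {set 'I_n}) : Meas (fun v : nat -> R => (Psi S (cl v))%:E).
Proof.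
move=> d Y g mg; apply/measurable_EFinP.
have -> : (fun y => Psi S (cl (fun i => g i y))) =
  (fun y => (Asum S (cl (fun i => g i y)) *
     (Num.max (Asum S (cl (fun i => g i y))) (Bsum S (cl (fun i => g i y)))) `^ (-1))%R).
  apply/funext => y; rewrite /Psi powR_inv1 //.
  by rewrite le_max Asum_ge0 //; exact: cl_nonneg.
apply: measurable_funM; first exact: meas_Asum.
have mm := meas_max (meas_Asum S mg) (meas_Bsum S mg).
have H := measurableT_comp (@measurable_powR R (-1)%R) mm.
exact H.
Qed.

End Meas3.

Lemma comb_le (R : realType) (n : nat) (E : {set 'I_n} -> \bar R) :
  (forall S S' : {set 'I_n}, S \subset S' -> (E S <= E S')%E) ->
  (forall (S : {set 'I_n}) (i0 i1 : 'I_n), (i0 < i1)%N -> E S = E (tperm i0 i1 @^-1: S)) ->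
  forall S S' : {set 'I_n}, (#|S| <= #|S'|)%N -> (E S <= E S')%E.
Proof.
move=> Em Ep.
have Ep' (S : {set 'I_n}) (a b : 'I_n) : a != b -> E S = E (tperm a b @^-1: S).
  move=> ab; case: (ltngtP a b) => [h|h|h]; first exact: Ep.
  - by rewrite tpermC; exact: Ep.
  - by move: ab; rewrite (val_inj h) eqxx.
move=> S S'.
move: {2}#|S :\: S'| (leqnn #|S :\: S'|) => N.
elim: N S => [|N IH] S hN hc.
  apply: Em; rewrite -finset.setD_eq0 -cards_eq0; apply/eqP; lia.
case: (set_0Vmem (S :\: S')) => [e|[b]].
  by apply: Em; rewrite -finset.setD_eq0 e.
rewrite inE => /andP [bS' bS].
have : (0 < #|S' :\: S|)%N.
  have h1 := cardsID S' S.
  have h2 := cardsID S S'.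
  have h3 : (0 < #|S :\: S'|)%N by apply/card_gt0P; exists b; rewrite inE bS bS'.
  rewrite finset.setIC in h2; lia.
move/card_gt0P => [a]; rewrite inE => /andP [aS aS'].
have ab : a != b by apply: contraNneq bS' => <-.
rewrite (Ep' S a b ab); apply: IH.
- have sub : (tperm a b @^-1: S) :\: S' \subset (S :\: S') :\ b.
    apply/fintype.subsetP => x; rewrite !inE => /andP [xS' xT].
    move: xT xS'; case: tpermP => [->|->|xa xb] xT xS'.
    + by rewrite aS' in xS'.
    + by rewrite xT in aS.
    + by rewrite xS' xT; apply/andP; split => //; apply/eqP.
  have := subset_leq_card sub; have := cardsD1 b (S :\: S').
  rewrite inE bS bS' /= => e h2; apply: (leq_trans h2); rewrite -ltnS -add1n -e; exact: hN.
- by rewrite card_preimset //; exact: perm_inj.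
Qed.

Section Final.
Variable R : realType.
Variable D : probability R R.
Hypothesis hD : D `[0%R, 1%R] = 1%E.
Variable n : nat.
Local Open Scope ereal_scope.

Lemma fam_le (Phi : {set 'I_n} -> (nat -> R) -> R) :
  (forall (S S' : {set 'I_n}) (s : nat -> R), S \subset S' -> nonneg s -> (Phi S s <= Phi S' s)%R) ->
  (forall (S : {set 'I_n}) (s : nat -> R) (i0 i1 : 'I_n),
     Phi S (fun c => s (vt i0 i1 c)) = Phi (tperm i0 i1 @^-1: S) s) ->
  (forall S : {set 'I_n}, Meas (fun v : nat -> R => (Phi S (cl v))%:E)) ->
  (forall (S : {set 'I_n}) (s : nat -> R), nonneg s -> (0 <= Phi S s)%R) ->
  forall S S' : {set 'I_n}, (#|S| <= #|S'|)%N ->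
  iter_int D (n * 2) (fun s => (Phi S s)%:E) <=
  iter_int D (n * 2) (fun s => (Phi S' s)%:E).
Proof.
move=> Pm Pp PM P0.
have in01 (v : nat -> R) : (forall i, `[0%R, 1%R] (v i)) -> cl v = v.
  move=> h; apply/funext => i; apply: clampE; have := h i.
  by rewrite /= in_itv.
have nn (v : nat -> R) : (forall i, `[0%R, 1%R] (v i)) -> nonneg v.
  by move=> h i; have := h i; rewrite /= in_itv => /andP[].
have Ecl (S : {set 'I_n}) : iter_int D (n * 2) (fun s => (Phi S s)%:E) =
             iter_int D (n * 2) (fun v => (Phi S (cl v))%:E).
  by apply/eqP; rewrite eq_le; apply/andP; split;
    apply: (iter_le_ae hD) => v hv; rewrite in01.
apply: comb_le => [S S' SS|S i0 i1 i01].
  apply: (iter_le_ae hD) => v hv; rewrite lee_fin; apply: Pm => //; exact: nn.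
rewrite !Ecl.
have Hinv : Inv D (n * 2) (vt i0 i1).
  by apply: Inv_vt => //; have := ltn_ord i1; lia.
rewrite -(Hinv (fun v => (Phi S (cl v))%:E) (PM S)); last first.
  by move=> v; rewrite lee_fin; apply: P0; exact: cl_nonneg.
congr iter_int; apply/funext => v; rewrite /act /=; congr EFin.
exact: Pp.
Qed.

End Final.

Lemma sort2 (R : realType) (x y : R) :
  sort (fun a b : R => b <= a) [:: x; y] = if y <= x then [:: x; y] else [:: y; x].
Proof. by rewrite /sort /=; case: ifP. Qed.

Lemma I2_neq (x k j : 'I_2) : k != j -> (x == k) = (x != j).
Proof.
case: x => [[|[|x]] hx] //; case: k => [[|[|k]] hk] //; case: j => [[|[|j]] hj] //.
Qed.

Section Rel.
Variable R : realType.
Variable n : nat.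

Lemma utility_eq (sigma : profile n 2) (s : nat -> R) (i : 'I_n) (k : 'I_2) :
  utility sigma s i k = if sigma i ord0 == k then Mx s i else Mn s i.
Proof.
rewrite /utility /voter_samples /= sort2 /Mx /Mn addn0.
case: eqP => [<-|ne]; first rewrite permK /=.
  by case: leP => h; rewrite ?max_l ?max_r // ltW.
have : (sigma i)^-1%g k != ord0.
  by apply/eqP => h; apply: ne; rewrite -h permKV.
move: ((sigma i)^-1%g k) => [[|[|?]] ?] //= _.
by case: leP => h; rewrite ?min_l ?min_r // ltW.
Qed.

Lemma sw_eq (sigma : profile n 2) (s : nat -> R) (k : 'I_2) :
  sw sigma s k = Asum [set i | sigma i ord0 == k] s.
Proof. by apply: eq_bigr => i _; rewrite utility_eq inE. Qed.

Lemma sw_eq' (sigma : profile n 2) (s : nat -> R) (k j : 'I_2) : k != j ->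
  sw sigma s k = Bsum [set i | sigma i ord0 == j] s.
Proof.
move=> kj; apply: eq_bigr => i _; rewrite utility_eq inE (I2_neq _ kj).
by case: eqP.
Qed.

Lemma dist_eq (sigma : profile n 2) (s : nat -> R) (j : 'I_2) :
  dist sigma s j = Psi [set i | sigma i ord0 == j] s.
Proof.
rewrite /dist /Psi /max_sw !big_ord_recl big_ord0 -sw_eq.
case: j => [[|[|j]] hj] //.
- have -> : Ordinal hj = ord0 by apply/val_inj.
  rewrite -(@sw_eq' sigma s (lift ord0 ord0) ord0) //.
  by rewrite maxCA maxxx maxC.
- have -> : Ordinal hj = lift ord0 ord0 by apply/val_inj.
  rewrite -(@sw_eq' sigma s ord0 (lift ord0 ord0)) //.
  by rewrite maxxx maxC.
Qed.

End Rel.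

Theorem theorem1 (R : realType) (n : nat) (hn : (1 <= n)%N)
  (D : probability R R) (hD : D `[0%R, 1%R] = 1%E)
  (f : voting_rule n 2) :
  majority_rule f ->
  exp_dist_maximizing D f /\ exp_welfare_maximizing D f.
Proof.
move=> maj; split => sigma j.
- rewrite /exp_dist.
  have E k : (fun s => (dist sigma s k)%:E) =
             (fun s => (Psi [set i | sigma i ord0 == k] s)%:E).
    by apply/funext => s; rewrite dist_eq.
  rewrite !E; apply: (fam_le hD).
  + by move=> S S' s SS s0; exact: Psi_mono.
  + by move=> S s i0 i1; exact: Psi_vt.
  + by move=> S; exact: Meas_Psi.
  + by move=> S s s0; exact: Psi_ge0.
  + exact: maj.
- rewrite /exp_sw.
  have E k : (fun s => (sw sigma s k)%:E) =
             (fun s => (Asum [set i | sigma i ord0 == k] s)%:E).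
    by apply/funext => s; rewrite sw_eq.
  rewrite !E; apply: (fam_le hD).
  + by move=> S S' s SS s0; exact: Asum_mono.
  + by move=> S s i0 i1; exact: Asum_vt.
  + by move=> S; exact: Meas_Asum.
  + by move=> S s s0; exact: Asum_ge0.
  + exact: maj.
Qed.
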